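(* Let $f(m_\ell, m_s)$ be any function with $f(m_\ell,m_s) = o(m_\ell + m_s)$. Then for all sufficiently large $m_\ell m_s$, on the $m_\ell \times m_s$ grid $G$ (with $m_\ell \ge m_s \ge 2$), the fraction of instances $(G, X_I, X_G)$ (over all pairs of configurations with all vertices occupied) whose minimum makespan is at most $f(m_\ell, m_s)$ is at most $(1/2)^{m_\ell/4}$.
   Context: The $m_\ell \times m_s$ grid graph has vertex set $\{1,\dots,m_\ell\}\times\{1,\dots,m_s\}$ with edges between vertices at $\ell_1$-distance 1. A configuration is a bijection from robot labels $\{1,\dots,m_\ell m_s\}$ to the vertex set. A move sequence proceeds in synchronous steps: each robot stays put or moves to an adjacent vertex, with no two robots at the same vertex afterwards and no two robots traversing the same edge in opposite directions. The minimum makespan of $(G,X_I,X_G)$ is the least number of steps of such a sequence taking $X_I$ to $X_G$. *)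

(* Defs.v *)
From HB Require Import structures.
From mathcomp Require Import all_boot all_order all_algebra.
From Stdlib Require Import ClassicalEpsilon.
Set Implicit Arguments. Unset Strict Implicit. Unset Printing Implicit Defensive.
Import Order.TTheory GRing.Theory Num.Theory.

(* Vertices of the ml x ms grid: 'I_ml * 'I_ms (0-indexed copy of
   {1..ml} x {1..ms}).  Robot labels: 'I_(ml*ms) (copy of {1..ml*ms}). *)
Definition vert (ml ms : nat) := ('I_ml * 'I_ms)%type.
Definition label (ml ms : nat) := 'I_(ml * ms).

Definition grid_adj (ml ms : nat) (u v : vert ml ms) : bool :=
  ((u.1 == v.1 :> nat) && ((u.2.+1 == v.2 :> nat) || (v.2.+1 == u.2 :> nat)))
  || ((u.2 == v.2 :> nat) && ((u.1.+1 == v.1 :> nat) || (v.1.+1 == u.1 :> nat))).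

(* a map from labels to vertices; a configuration is such a map that is a
   bijection (= injective, since both types have ml*ms elements) *)
Definition cmap (ml ms : nat) := {ffun label ml ms -> vert ml ms}.

Definition configs (ml ms : nat) : {set cmap ml ms} :=
  [set X : cmap ml ms | injectiveb X].

Definition step (ml ms : nat) (X Y : cmap ml ms) : bool :=
  [&& [forall r, (Y r == X r) || grid_adj (X r) (Y r)],
      injectiveb Y
    & [forall r1, forall r2, (r1 != r2) ==>
         ~~ ((Y r1 == X r2) && (Y r2 == X r1))] ].

Fixpoint reach (ml ms : nat) (k : nat) (X Y : cmap ml ms) : bool :=
  if k is k'.+1 then [exists Z, step X Z && @reach ml ms k' Z Y]
  else X == Y.

Definition makespan_le (R : realFieldType) (ml ms : nat)
    (XI XG : cmap ml ms) (t : R) : Prop :=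
  exists k : nat, reach k XI XG /\ (k%:R <= t)%R.

Definition pbool (P : Prop) : bool :=
  if excluded_middle_informative P then true else false.

Definition good_instances (R : realFieldType) (ml ms : nat) (t : R)
  : {set cmap ml ms * cmap ml ms} :=
  [set p in setX (configs ml ms) (configs ml ms) |
     pbool (makespan_le p.1 p.2 t)].

Definition frac_good (R : realFieldType) (ml ms : nat) (t : R) : R :=
  (#|good_instances ml ms t|%:R / (#|configs ml ms| ^ 2)%:R)%R.

(* Main.v *)
Require Import Defs.
From HB Require Import structures.
From mathcomp Require Import all_boot all_order all_algebra.
From mathcomp Require Import zify.
From Stdlib Require Import ClassicalEpsilon.
Import Order.TTheory GRing.Theory Num.Theory.
Set Implicit Arguments. Unset Strict Implicit.

Definition hx ml ms (v : vert ml ms) : nat := nat_of_ord v.1.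

Lemma adj_disp ml ms (u v : vert ml ms) : (v == u) || grid_adj u v ->
  (hx v <= hx u + 1)%N /\ (hx u <= hx v + 1)%N.
Proof.
case: u v => [a b] [c d]; rewrite /hx /grid_adj /=.
move=> /orP [/eqP [-> _] | ]; first by lia.
move=> /orP [/andP [/eqP e _] | /andP [_ /orP [/eqP e2 | /eqP e2]]]; lia.
Qed.

Lemma reach_disp ml ms k (X Y : cmap ml ms) : reach k X Y ->
  forall r, (hx (X r) <= hx (Y r) + k)%N /\ (hx (Y r) <= hx (X r) + k)%N.
Proof.
elim: k X => [|k IH] X /=.
  by move=> /eqP -> r; lia.
move=> /existsP [Z /andP [/andP [/forallP H _] HZ]] r.
have [h1 h2] := IH Z HZ r.
have := adj_disp (H r).
lia.
Qed.

Definition hP (h : nat) (b : {ffun 'I_h -> bool}) (x : nat) : bool :=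
  [exists i : 'I_h, (val i == x) && b i].

Definition swn h (b : {ffun 'I_h -> bool}) (x : nat) : nat :=
  if (x < h) && hP b x then x + h
  else if (h <= x) && (x < h + h) && hP b (x - h) then x - h else x.

Lemma swnK h b x : swn (h:=h) b (swn b x) = x.
Proof.
rewrite /swn.
case E1: ((x < h) && hP b x).
  move/andP: E1 => [l1 p1].
  rewrite ifF; last by apply/negbTE; lia.
  by rewrite addnK p1 ifT //; apply/andP; split => //; lia.
case E2: ((h <= x) && (x < h + h) && hP b (x - h)).
  move/andP: E2 => [/andP [l1 l2] p1].
  by rewrite p1 ifT; [lia | apply/andP; split=> //; lia].
by rewrite E1 E2.
Qed.

Lemma swn_lt h b x ml : (x < ml -> h + h <= ml -> swn (h:=h) b x < ml)%N.
Proof. rewrite /swn; case: ifP => [/andP [? _]|_]; [lia|]; case: ifP=> [/andP [/andP [? ?] _]|_]; lia. Qed.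

Lemma swn_cases h b x : ((x < h) && hP (h:=h) b x /\ swn b x = x + h) \/
   ((h <= x)%N /\ swn b x = x - h) \/ swn b x = x.
Proof.
rewrite /swn; case: ifP => [E|_]; first by left.
by case: ifP => [/andP [/andP [? ?] _]|_]; right; [left|right].
Qed.

Definition swv ml ms h (b : {ffun 'I_h -> bool}) (v : vert ml ms) : vert ml ms :=
  if val v.2 == 0 then (insubd v.1 (swn b v.1), v.2) else v.

Lemma swv1 ml ms h (b : {ffun 'I_h -> bool}) (v : vert ml ms) : (h + h <= ml)%N ->
  val (swv b v).1 = (if val v.2 == 0 then swn b v.1 else v.1) /\ (swv b v).2 = v.2.
Proof.
move=> Hh; rewrite /swv; case: ifP => //= _.
by rewrite val_insubd swn_lt.
Qed.

Lemma swvK ml ms h (b : {ffun 'I_h -> bool}) (v : vert ml ms) : (h + h <= ml)%N -> swv b (swv b v) = v.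
Proof.
move=> Hh; have [e1 e2] := swv1 b v Hh.
have [e3 e4] := swv1 b (swv b v) Hh.
case: v e1 e2 e3 e4 => [x y] e1 e2 e3 e4 /=.
rewrite e2 /= in e3 e4; case: (swv b (swv b (x, y))) e3 e4 => [x' y'] /= e3 e4.
congr pair => //; apply: val_inj => /=; rewrite e3 e1.
by rewrite /=; case: (val y == 0) => //; rewrite swnK.
Qed.

Definition Fsw ml ms h (b : {ffun 'I_h -> bool}) (X : cmap ml ms) : cmap ml ms :=
  [ffun r => swv b (X r)].

Definition close ml ms (K0 : nat) (X Y : cmap ml ms) : bool :=
  [forall r, (hx (X r) <= hx (Y r) + K0)%N && (hx (Y r) <= hx (X r) + K0)%N].

Lemma conf_onto ml ms (X : cmap ml ms) : X \in configs ml ms -> forall v, exists r, X r = v.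
Proof.
rewrite inE => /injectiveP HX v.
have := inj_card_onto HX _ v.
rewrite card_prod !card_ord => /(_ (leqnn _)) /codomP [r ->]; by exists r.
Qed.

Lemma bit_incl ml ms K0 h (Hh : (h + h <= ml)%N) (HK : (K0 + K0 < h)%N) (Hms : (0 < ms)%N)
  (b b' : {ffun 'I_h -> bool}) (X Y Y' : cmap ml ms) :
  Y \in configs ml ms -> close K0 X Y -> close K0 X Y' -> Fsw b Y = Fsw b' Y' ->
  forall i, b i -> b' i.
Proof.
move=> HY /forallP cY /forallP cY' E i bi.
have il : (i < ml)%N by have := ltn_ord i; lia.
have [r Yr] := conf_onto HY (Ordinal il, Ordinal Hms).
have E' := congr1 (fun F : cmap ml ms => F r) E; rewrite /= !ffunE Yr in E'.
have [a1 a2] := swv1 b (Ordinal il, Ordinal Hms) Hh.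
have [a3 a4] := swv1 b' (Y' r) Hh.
rewrite E' in a1 a2.
have hPi : hP b i by apply/existsP; exists i; rewrite eqxx.
have sw1 : swn b i = i + h by rewrite /swn ltn_ord hPi.
have e2 : val (Y' r).2 = 0 by rewrite -a4 a2.
have a3' : swn b' (hx (Y' r)) = i + h.
  by rewrite -sw1; move: a3; rewrite e2 eqxx a1 => <-.
have c1 := cY r; have c2 := cY' r.
have hv : hx (Y r) = i by rewrite Yr.
move: c1 c2 a3'; set u := hx (Y' r) => c1 c2 a3'.
have [[/andP [ul pu] su]|[[hu su]|su]] := swn_cases b' u.
- have ui : u = i by lia.
  move: pu; rewrite ui => /existsP [j /andP [/eqP ej bj]].
  by have -> : i = j by apply: val_inj.
- move/andP: c1 => [c1 c1b]; move/andP: c2 => [c2 c2b]; lia.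
- move/andP: c1 => [c1 c1b]; move/andP: c2 => [c2 c2b]; lia.
Qed.

Lemma count_close ml ms K0 h (Hh : (h + h <= ml)%N) (HK : (K0 + K0 < h)%N) (Hms : (0 < ms)%N)
  (G' : {set cmap ml ms * cmap ml ms})
  (HG : forall p, p \in G' -> [&& p.1 \in configs ml ms, p.2 \in configs ml ms & close K0 p.1 p.2]) :
  (2 ^ h * #|G'| <= #|configs ml ms| ^ 2)%N.
Proof.
pose Phi (q : {ffun 'I_h -> bool} * (cmap ml ms * cmap ml ms)) := (q.2.1, Fsw q.1 q.2.2).
pose D := setX [set: {ffun 'I_h -> bool}] G'.
have cD : #|D| = (2 ^ h * #|G'|)%N by rewrite cardsX cardsT card_ffun card_bool card_ord.
have inj : {in D &, injective Phi}.
  move=> [b [X Y]] [b' [X' Y']]; rewrite !inE /= => H1 H2 [eX eF].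
  subst X'.
  move/and3P: (HG _ H1) => /= [_ cfY clY].
  move/and3P: (HG _ H2) => /= [_ cfY' clY'].
  have eb : b = b'.
    apply/ffunP => i; apply/idP/idP.
    - exact: (bit_incl Hh HK Hms cfY clY clY' eF).
    - exact: (bit_incl Hh HK Hms cfY' clY' clY (esym eF)).
  subst b'; congr pair; congr pair.
  apply/ffunP => r; have := congr1 (fun F : cmap ml ms => F r) eF; rewrite !ffunE => e.
  by rewrite -(swvK b (Y r)) // e swvK.
have sub : [set Phi q | q in D] \subset setX (configs ml ms) (configs ml ms).
  apply/subsetP => p /imsetP [[b [X Y]] H1 ->]; rewrite !inE /= in H1.
  move/and3P: (HG _ H1) => /= [cfX cfY _].
  have iY : injective Y by move: cfY; rewrite /configs inE => /injectiveP.
  apply/setXP; split => //=; rewrite /configs inE; apply/injectiveP => r1 r2.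
  rewrite !ffunE => e; apply: iY.
  by rewrite -(swvK b (Y r1)) // e swvK.
rewrite -cD -(card_in_imset inj).
apply: leq_trans (subset_leq_card sub) _.
by rewrite cardsX expnS expn1.
Qed.

Theorem lemma5 (R : realFieldType) (f : nat -> nat -> R)
  (f_small : forall eps : R, (0 < eps)%R ->
     exists N : nat, forall ml ms : nat, (2 <= ms)%N -> (ms <= ml)%N ->
       (N <= ml + ms)%N -> (`|f ml ms| <= eps * (ml + ms)%:R)%R) :
  exists N : nat, forall ml ms : nat, (2 <= ms)%N -> (ms <= ml)%N ->
    (N <= ml * ms)%N ->
    (frac_good ml ms (f ml ms) ^+ 4 <= (2%:R^-1) ^+ ml)%R.
Proof.
have eps_pos : ((0 : R) < (16%:R)^-1)%R by rewrite invr_gt0 ltr0n.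
have [N HN] := f_small _ eps_pos.
exists (N * N)%N => ml ms H2 Hle HNN.
have NL : (N <= ml + ms)%N by nia.
have Hf := HN ml ms H2 Hle NL.
pose K0 := (ml %/ 8)%N; pose h := (ml %/ 2)%N.
have Hh : (h + h <= ml)%N by rewrite /h; lia.
have HK : (K0 + K0 < h)%N by rewrite /K0 /h; lia.
have Hms : (0 < ms)%N by lia.
pose G' := [set p : cmap ml ms * cmap ml ms |
   [&& p.1 \in configs ml ms, p.2 \in configs ml ms & close K0 p.1 p.2]].
have sub : good_instances ml ms (f ml ms) \subset G'.
  apply/subsetP => -[X Y]; rewrite /good_instances !inE /= => /andP [/andP [c1 c2]].
  rewrite /pbool; case: excluded_middle_informative => // [[k [Hr Hk]]] _.
  rewrite c1 c2 /=.
  have k16 : (16 * k <= ml + ms)%N.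
    have : ((k%:R : R) <= (16%:R)^-1 * (ml + ms)%:R)%R
      := le_trans Hk (le_trans (ler_norm _) Hf).
    by rewrite ler_pdivlMl ?ltr0n // -natrM ler_nat.
  have kK : (k <= K0)%N by rewrite /K0; lia.
  apply/forallP => r; have [a b] := reach_disp Hr r; apply/andP; split; lia.
have HG : forall p, p \in G' -> [&& p.1 \in configs ml ms, p.2 \in configs ml ms & close K0 p.1 p.2] by move=> p; rewrite inE.
have cnt := @count_close ml ms K0 h Hh HK Hms G' HG.
have key : (2 ^ h * #|good_instances ml ms (f ml ms)| <= #|configs ml ms| ^ 2)%N
  := leq_trans (leq_mul (leqnn _) (subset_leq_card sub)) cnt.
rewrite /frac_good.
move: key; set g := #|good_instances _ _ _|; set c := #|configs _ _| => key.
have [c0|cpos] := eqVneq (c ^ 2)%N 0%N.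
  by rewrite c0 invr0 mulr0 expr0n /= exprn_ge0 // invr_ge0 ler0n.
have fr : ((g%:R / (c ^ 2)%:R : R) <= (2%:R^-1) ^+ h)%R.
  rewrite ler_pdivrMr ?ltr0n ?lt0n // exprVn -natrX ler_pdivlMl ?ltr0n ?expn_gt0 //.
  by rewrite -natrM ler_nat.
apply: le_trans (lerXn2r 4 _ _ fr) _.
- by rewrite nnegrE divr_ge0 ?ler0n.
- by rewrite nnegrE exprn_ge0 // invr_ge0 ler0n.
rewrite -exprM; apply: ler_wiXn2l.
- by rewrite invr_ge0 ler0n.
- by rewrite invf_le1 ?ltr0n // ler1n.
- rewrite /h; lia.
Qed.
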